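(* There is an absolute constant $C>0$ such that the following holds. Let $n\ge1$, $K\ge1$, and let $X_1,\dots,X_n$ be i.i.d. random variables with $0\le X_j\le Kn$ almost surely and $\mathbb{E}X_j\le 1$. Let $\varepsilon\in(0,1/2)$. Then there exist random variables $W_1,\dots,W_n$ taking values in $[0,1]$, defined on a common probability space with $X_1,\dots,X_n$ (possibly after enlarging the probability space), such that $$\sum_{j=1}^n W_jX_j\le CK\log(\varepsilon^{-1})\, n\quad\text{almost surely}$$ and $$1\le \mathbb{E}\Big(\prod_{j=1}^n W_j\Big)^{-1}\le 1+\varepsilon.$$ *)

(* Defs.v *)
From HB Require Import structures.
From mathcomp Require Import all_boot all_order all_algebra.
From mathcomp Require Import all_classical all_reals all_analysis.
Set Implicit Arguments. Unset Strict Implicit. Unset Printing Implicit Defensive.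
Import Order.TTheory GRing.Theory Num.Theory.
Local Open Scope classical_set_scope.
Local Open Scope ring_scope.

Definition mutually_independent d (T : measurableType d) (R : realType)
  (P : probability T R) (n : nat) (X : 'I_n -> T -> R) : Prop :=
  (forall j, measurable_fun setT (X j)) /\
  (forall B : 'I_n -> set R, (forall j, measurable (B j)) ->
     P (\bigcap_(j in [set: 'I_n]) (X j @^-1` B j)) =
     (\prod_(j < n) P (X j @^-1` B j))%E).

Definition identically_distributed d (T : measurableType d) (R : realType)
  (P : probability T R) (n : nat) (X : 'I_n -> T -> R) : Prop :=
  forall (i j : 'I_n) (B : set R), measurable B ->
    P (X i @^-1` B) = P (X j @^-1` B).

Definition iid d (T : measurableType d) (R : realType)
  (P : probability T R) (n : nat) (X : 'I_n -> T -> R) : Prop :=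
  mutually_independent P X /\ identically_distributed P X.

Definition inv_prod (T : Type) (R : realType) (n : nat) (W : 'I_n -> T -> R)
  (x : T) : \bar R :=
  let p := \prod_(j < n) W j x in
  if p == 0 then +oo%E else (p^-1)%:E.

(* Main.v *)
Require Import Defs.
From HB Require Import structures.
From mathcomp Require Import all_boot all_order all_algebra.
From mathcomp Require Import all_classical all_reals all_analysis.
From mathcomp Require Import ring lra.
Set Implicit Arguments. Unset Strict Implicit. Unset Printing Implicit Defensive.
Import Order.TTheory GRing.Theory Num.Theory.
Local Open Scope ring_scope.
Local Notation truncn := Num.truncn.
Section R1.
Variable R : realType.

Lemma e_le4 : expR (1:R) <= 4.
Proof.
have h1 := expR_ge1Dx (- (1/2 : R)).
have h2 : expR (1:R) = expR (1/2) * expR (1/2).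
  by rewrite -expRD; congr expR; field.
have h3 : expR (- (1/2:R)) * expR (1/2) = 1 by rewrite -expRD addNr expR0.
have h4 : 0 < expR (1/2 : R) := expR_gt0 _.
rewrite h2; nra.
Qed.

Lemma expR_le1t (t : R) : expR t <= 1 + t * expR t.
Proof.
have h1 := expR_ge1Dx (- t).
have h3 : expR (- t) * expR t = 1 by rewrite -expRD addNr expR0.
have h4 : 0 < expR t := expR_gt0 _.
nra.
Qed.

Lemma phi_bound (c x : R) : 0 < c -> 0 <= x ->
  expR (Num.min x c / c) * Num.max 1 (2 * x / c) <= 1 + 12 * x / c.
Proof.
move=> c0 x0.
set t := x / c.
have t0 : 0 <= t by rewrite /t divr_ge0// ltW.
have e4 := e_le4.
have -> : 2 * x / c = 2 * t by rewrite /t mulrA.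
have -> : 12 * x / c = 12 * t by rewrite /t mulrA.
have [xc|cx] := leP x c.
  rewrite -/t.
  have t1 : t <= 1 by rewrite /t ler_pdivrMr// mul1r.
  have et : expR t <= expR 1 by rewrite ler_expR.
  have := expR_le1t t.
  have ep : 0 < expR t := expR_gt0 _.
  have hm : Num.max 1 (2 * t) <= 1 + 2 * t.
    by rewrite ge_max; apply/andP; split; lra.
  have hm0 : 0 <= Num.max 1 (2 * t) by rewrite le_max ler01.
  move=> h.
  have : expR t * Num.max 1 (2 * t) <= expR t * (1 + 2 * t) by rewrite ler_wpM2l// ltW.
  nra.
rewrite divff ?gt_eqF//.
have t1 : 1 < t by rewrite /t ltr_pdivlMr// mul1r.
have t2 : 1 <= 2 * t by lra.
rewrite (max_idPr t2).
have ep : 0 < expR (1:R) := expR_gt0 _.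
nra.
Qed.

End R1.
Section Fin.
Variables (R : realType) (n N : nat) (K eps : R) (u : 'I_N -> R).
Hypotheses (hn : (1 <= n)%N) (hK : 1 <= K) (he0 : 0 < eps) (he1 : eps < 1/2)
  (hu : forall k, 0 < u k <= K * n%:R).

Lemma he1L : eps < 1/2. Proof. exact: he1. Qed.
Lemma he0L : 0 < eps. Proof. exact: he0. Qed.
Lemma hKL : 1 <= K. Proof. exact: hK. Qed.

Definition Lg : R := ln (eps^-1).
Definition Mb : R := 128 * K * Lg * n%:R.
Definition cc (j : nat) : R := K * n%:R / 2 ^+ j.
Definition Tsum (w : {ffun 'I_n -> 'I_N}) (j : nat) : R :=
  \sum_i Num.min (u (w i)) (cc j).
Definition jst (w : {ffun 'I_n -> 'I_N}) : nat :=
  find (fun j => Tsum w j <= Mb) (iota 0 n.+1).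
Definition Wd (w : {ffun 'I_n -> 'I_N}) (i : 'I_n) : R :=
  Num.min 1 (cc (jst w) / u (w i)).

Lemma Lg_gt : 1/2 < Lg.
Proof.
have h := expR_ge1Dx (- Lg).
have : expR (- Lg) = eps.
  by rewrite /Lg -lnV ?posrE ?invr_gt0// ?invrK lnK// posrE.
move=> h2; rewrite h2 in h; have := he1L; lra.
Qed.

Lemma nR_gt0 : 0 < n%:R :> R.
Proof. by rewrite ltr0n. Qed.

Lemma cc_gt0 j : 0 < cc j.
Proof.
have hK' := hKL; have Kp : 0 < K by lra.
by rewrite /cc divr_gt0 ?exprn_gt0 ?mulr_gt0 ?nR_gt0.
Qed.

Lemma Tsum_n w : Tsum w n <= Mb.
Proof.
have h1 : Tsum w n <= \sum_(i < n) cc n.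
  by apply: ler_sum => i _; rewrite ge_min lexx orbT.
apply: (le_trans h1).
rewrite sumr_const card_ord /cc /Mb.
have n2 : n%:R <= 2 ^+ n :> R.
  by rewrite -natrX ler_nat ltnW// ltn_expl.
have hK' := hKL.
have Kn0 : 0 < K * n%:R by rewrite mulr_gt0// ?nR_gt0//; lra.
have hL := Lg_gt.
have -> : K * n%:R / 2 ^+ n *+ n = K * n%:R * (n%:R / 2 ^+ n).
  by rewrite -mulr_natr; field; rewrite expf_neq0.
have h2 : n%:R / 2 ^+ n <= 1 :> R.
  by rewrite ler_pdivrMr ?exprn_gt0// mul1r.
have h3 : K * n%:R * (n%:R / 2 ^+ n) <= K * n%:R by rewrite ler_piMr// ltW.
apply: (le_trans h3).
have hn0 := nR_gt0.
nra.
Qed.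

Lemma jst_le w : (jst w <= n)%N.
Proof.
rewrite /jst -ltnS.
have := has_find (fun j => Tsum w j <= Mb) (iota 0 n.+1).
rewrite size_iota => <-.
apply/hasP; exists n; first by rewrite mem_iota add0n ltnSn.
exact: Tsum_n.
Qed.

Lemma jst_ok w : Tsum w (jst w) <= Mb.
Proof.
have := nth_find 0 (a := fun j => Tsum w j <= Mb) (s := iota 0 n.+1).
rewrite nth_iota ?add0n; last by rewrite ltnS jst_le.
apply; apply/hasP; exists n; first by rewrite mem_iota add0n ltnSn.
exact: Tsum_n.
Qed.

Lemma jst_bad w j : (j < jst w)%N -> Mb < Tsum w j.
Proof.
move=> hj; have := before_find 0 hj.
rewrite nth_iota ?add0n; last by apply: (leq_trans hj); exact: leqW (jst_le w).
by move/negbT; rewrite -ltNge.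
Qed.

End Fin.
Section Fin2.
Variables (R : realType) (n N : nat) (K eps : R) (u : 'I_N -> R).
Hypotheses (hn : (1 <= n)%N) (hK : 1 <= K) (he0 : 0 < eps) (he1 : eps < 1/2)
  (hu : forall k, 0 < u k <= K * n%:R).

Local Notation cc := (cc n K).
Local Notation Mb := (Mb n K eps).
Local Notation Tsum := (@Tsum _ n N K u).
Local Notation jst := (@jst _ n N K eps u).
Local Notation Wd := (@Wd _ n N K eps u).

Definition cost (w : {ffun 'I_n -> 'I_N}) : R := (\prod_i Wd w i)^-1.
Definition phiE (j : nat) (w : {ffun 'I_n -> 'I_N}) : R :=
  expR ((Tsum w j - Mb) / cc j) * \prod_i Num.max 1 (2 * u (w i) / cc j).

Lemma u_gt0 k : 0 < u k. Proof. by case/andP: (hu k). Qed.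
Lemma u_le k : u k <= K * n%:R. Proof. by case/andP: (hu k). Qed.

Lemma Wd_gt0 w i : 0 < Wd w i.
Proof.
by rewrite /Wd lt_min ltr01 divr_gt0// ?u_gt0// (cc_gt0 hn hK).
Qed.

Lemma Wd_le1 w i : Wd w i <= 1.
Proof. by rewrite /Wd ge_min lexx. Qed.

Lemma Wd_inv w i : (Wd w i)^-1 = Num.max 1 (u (w i) / cc (jst w)).
Proof.
have c0 := cc_gt0 hn hK (jst w).
have u0 := u_gt0 (w i).
rewrite /Wd -[u (w i) / _]invf_div.
set a := cc (jst w) / u (w i).
have a0 : 0 < a by rewrite divr_gt0.
have [a1|a1] := leP a 1.
  by rewrite (max_idPr _)// invf_ge1.
rewrite invr1 (max_idPl _)//.
by rewrite invf_le1// ltW.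
Qed.

Lemma cost_eq w : cost w = \prod_i Num.max 1 (u (w i) / cc (jst w)).
Proof. by rewrite /cost -prodfV; apply: eq_bigr => i _; rewrite Wd_inv. Qed.

Lemma phiE_ge0 j w : 0 <= phiE j w.
Proof.
rewrite /phiE mulr_ge0// ?expR_ge0//.
by apply: prodr_ge0 => i _; rewrite le_max ler01.
Qed.

Lemma cost_bound w : cost w <= 1 + \sum_(j < n) phiE j w.
Proof.
rewrite cost_eq.
have hb := @jst_bad R n N K eps u hn hK he0 he1 w.
have hl : (jst w <= n)%N by apply: jst_le.
case E: (jst w) hb hl => [|j] hb hl.
  rewrite big1; last first.
    move=> i _; apply/max_idPl.
    rewrite /cc expr0 divr1 ler_pdivrMr ?mul1r ?u_le//.
    by rewrite mulr_gt0 ?ltr0n//; have := hKL hK; lra.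
  by rewrite lerDl sumr_ge0// => j _; exact: phiE_ge0.
have jn : (j < n)%N by [].
have ccS : cc j.+1 = cc j / 2 by rewrite /cc exprS; field; rewrite expf_neq0.
have c0 := cc_gt0 hn hK j.
have -> : \prod_i Num.max 1 (u (w i) / cc j.+1) =
          \prod_i Num.max 1 (2 * u (w i) / cc j).
  by apply: eq_bigr => i _; rewrite ccS; congr Num.max; field; rewrite gt_eqF.
have h1 : \prod_i Num.max 1 (2 * u (w i) / cc j) <= phiE j w.
  rewrite /phiE ler_peMl//; first by apply: prodr_ge0 => i _; rewrite le_max ler01.
  have := expR_ge1Dx ((Tsum w j - Mb) / cc j).
  have : 0 <= (Tsum w j - Mb) / cc j.
    by rewrite divr_ge0 ?ltW// subr_gt0 hb.
  lra.
apply: (le_trans h1).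
rewrite (bigD1 (Ordinal jn))//= -[X in X <= _]add0r lerD// lerDl.
by rewrite sumr_ge0// => k _; exact: phiE_ge0.
Qed.

End Fin2.
Lemma geom_half (R : realType) (m : nat) :
  \sum_(j < m) (1/2 : R) ^+ j.+1 = 1 - (1/2) ^+ m.
Proof.
elim: m => [|m IH]; first by rewrite big_ord0 expr0 subrr.
by rewrite big_ord_recr /= IH exprS; field.
Qed.

Lemma geom_half_le (R : realType) (m : nat) :
  \sum_(j < m) (1/2 : R) ^+ j.+1 <= 1.
Proof. by rewrite geom_half lerBlDr lerDl exprn_ge0. Qed.

Section Fin3.
Variables (R : realType) (n N : nat) (K eps : R) (u : 'I_N -> R).
Hypotheses (hn : (1 <= n)%N) (hK : 1 <= K) (he0 : 0 < eps) (he1 : eps < 1/2)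
  (hu : forall k, 0 < u k <= K * n%:R).

Local Notation cc := (cc n K).
Local Notation Mb := (Mb n K eps).
Local Notation Tsum := (@Tsum _ n N K u).
Local Notation jst := (@jst _ n N K eps u).
Local Notation Wd := (@Wd _ n N K eps u).
Local Notation cost := (@cost _ n N K eps u).
Local Notation phiE := (@phiE _ n N K eps u).

Definition phi (j : nat) (x : R) : R :=
  expR (Num.min x (cc j) / cc j) * Num.max 1 (2 * x / cc j).

Lemma phiE_split j w : phiE j w =
  expR (- (Mb / cc j)) * \prod_i phi j (u (w i)).
Proof.
rewrite /phiE /Tsum mulrBl mulr_suml addrC expRD expR_sum -mulrA.
by congr (_ * _); rewrite -big_split.
Qed.

Lemma exp_term j : (j < n)%N ->
  expR (- (Mb / cc j) + n%:R * (24 / cc j)) <= eps * (1/2) ^+ j.+1.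
Proof.
move=> jn.
have hK' := hKL hK.
have hL := Lg_gt he0 he1.
have n0 : 0 < n%:R :> R by rewrite ltr0n.
have K0 : 0 < K by lra.
set q : R := 2 ^+ j.
have q0 : 0 < q by rewrite exprn_gt0.
have jq : (j.+2)%:R <= 2 * q.
  rewrite /q -exprS -natrX ler_nat.
  exact: ltn_expl.
have e1 : Mb / cc j = 128 * Lg eps * q.
  rewrite /Mb /cc -/q; field.
  by rewrite (gt_eqF q0) (gt_eqF n0) (gt_eqF K0).
have e2 : n%:R * (24 / cc j) = 24 * q / K.
  rewrite /cc -/q; field.
  by rewrite (gt_eqF q0) (gt_eqF n0) (gt_eqF K0).
have e3 : 24 * q / K <= 24 * q.
  rewrite ler_pdivrMr //; nra.
have h1 : - (Mb / cc j) + n%:R * (24 / cc j) <= - ((j.+2)%:R * Lg eps).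
  rewrite e1 e2.
  have : (j.+2)%:R * Lg eps <= 2 * q * Lg eps.
    by rewrite ler_wpM2r // ltW //; lra.
  have : 0 < q * Lg eps by rewrite mulr_gt0 //; lra.
  nra.
apply: (le_trans (_ : _ <= expR (- ((j.+2)%:R * Lg eps)))).
  by rewrite ler_expR.
have -> : - ((j.+2)%:R * Lg eps) = (j.+2)%:R * ln eps.
  by rewrite /Lg lnV ?posrE // mulrN opprK.
rewrite expRM_natl lnK ?posrE // exprS.
rewrite ler_pM2l // lerXn2r ?nnegrE ?ltW //; lra.
Qed.

Lemma fin_main (p : 'I_N -> R) : (forall k, 0 <= p k) -> \sum_k p k <= 1 ->
  \sum_k p k * u k <= 2 ->
  \sum_(w : {ffun 'I_n -> 'I_N}) cost w * \prod_i p (w i) <= 1 + eps.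
Proof.
move=> p0 sp1 spu.
have pw0 w : 0 <= \prod_i p (w i) by apply: prodr_ge0.
apply: (le_trans (_ : _ <= \sum_w (1 + \sum_(j < n) phiE j w) * \prod_i p (w i))).
  apply: ler_sum => w _; apply: ler_wpM2r => //.
  exact: cost_bound.
under eq_bigr do rewrite mulrDl mul1r mulr_suml.
rewrite big_split /= exchange_big /=.
have A : \sum_(w : {ffun 'I_n -> 'I_N}) \prod_i p (w i) <= 1.
  rewrite -(bigA_distr_bigA (fun (i : 'I_n) k => p k)) /= prodr_const card_ord.
  by rewrite exprn_ile1 // sumr_ge0.
apply: lerD => //.
apply: (le_trans (_ : _ <= \sum_(j < n) eps * (1/2) ^+ j.+1)); last first.
  by rewrite -mulr_sumr ler_piMr ?geom_half_le // ltW.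
apply: ler_sum => j _.
have c0 := cc_gt0 hn hK j.
under eq_bigr do rewrite phiE_split -mulrA -big_split /=.
rewrite -mulr_sumr.
rewrite -(bigA_distr_bigA (fun (i : 'I_n) k => phi j (u k) * p k)) /= prodr_const card_ord.
have ug k : 0 < u k := u_gt0 (n:=n) (K:=K) hu k.
have phi0 x : 0 <= phi j x.
  by rewrite /phi mulr_ge0 ?expR_ge0 // le_max ler01.
have S1 : \sum_k phi j (u k) * p k <= 1 + 24 / cc j.
  apply: (le_trans (_ : _ <= \sum_k (p k + 12 / cc j * (p k * u k)))).
    apply: ler_sum => k _.
    have hk := phi_bound c0 (ltW (ug k)).
    have e : p k + 12 / cc j * (p k * u k) = (1 + 12 * u k / cc j) * p k.
      by field; rewrite gt_eqF.
    by rewrite e ler_wpM2r.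
  rewrite big_split /= -mulr_sumr.
  have : 12 / cc j * \sum_k p k * u k <= 12 / cc j * 2.
    by rewrite ler_wpM2l // divr_ge0 // ltW.
  have : 12 / cc j * 2 = 24 / cc j by rewrite mulrAC; congr (_ / _); lra.
  lra.
have S0 : 0 <= \sum_k phi j (u k) * p k by rewrite sumr_ge0 // => k _; rewrite mulr_ge0.
have S2 : (\sum_k phi j (u k) * p k) ^+ n <= expR (n%:R * (24 / cc j)).
  rewrite expRM_natl; apply: lerXn2r; rewrite ?nnegrE ?expR_ge0 //.
  apply: (le_trans S1); have := expR_ge1Dx (24 / cc j); lra.
apply: (le_trans _ (exp_term (ltn_ord j))).
rewrite expRD ler_wpM2l // expR_ge0 //.
Qed.

End Fin3.
Local Open Scope classical_set_scope.
Section Gen.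
Context d (T : measurableType d) (R : realType) (mu : {measure set T -> \bar R}).
Variables (I : finType) (f : T -> I).
Hypothesis mf : forall i, measurable (f @^-1` [set i]).

Lemma fin_decomp (G : I -> R) x :
  G (f x) = \sum_i G i * \1_(f @^-1` [set i]) x.
Proof.
rewrite (bigD1 (f x)) //= indicE mem_set // mulr1 big1 ?addr0 // => i /negPf hi.
rewrite indicE memNset ?mulr0 //= => hfi.
by move: hi; rewrite hfi eqxx.
Qed.

Lemma fin_meas (G : I -> R) : measurable_fun setT (fun x => G (f x)).
Proof.
rewrite (_ : (fun x => G (f x)) = fun x => \sum_i G i * \1_(f @^-1` [set i]) x).
  apply: measurable_sum => i.
  apply: measurable_realfun.measurable_funM; first exact: measurable_cst.
  exact: measurable_realfun.measurable_indic.
by apply/funext => x; rewrite fin_decomp.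
Qed.

Lemma fin_integral (G : I -> R) : (forall i, 0 <= G i) ->
  (\int[mu]_x (G (f x))%:E = \sum_i (G i)%:E * mu (f @^-1` [set i]))%E.
Proof.
move=> G0.
under eq_integral do rewrite fin_decomp -sumEFin.
rewrite ge0_integral_sum //; last first.
- by move=> i x _; rewrite lee_fin mulr_ge0.
- move=> i; apply/measurable_realfun.measurable_EFinP; apply: measurable_realfun.measurable_funM; first exact: measurable_cst.
  exact: measurable_realfun.measurable_indic.
apply: eq_bigr => i _.
rewrite (integralZl_indic _ (fun _ => f @^-1` [set i])) //; last first.
  by move=> /lt_geF; rewrite G0.
by rewrite integral_indic // setIT.
Qed.

End Gen.
Section Idx.
Variables (R : realType) (Nm : nat).

Definition kap (r : R) : 'I_Nm.+1 := inord (minn (truncn r) Nm).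

Lemma kap_val r : val (kap r) = minn (truncn r) Nm.
Proof. by rewrite /kap /= inordK // ltnS geq_minr. Qed.

Definition Gset (m : nat) : set R := [set r | (m <= truncn r)%N].

Lemma Gset_meas m : measurable (Gset m).
Proof.
case: m => [|m].
  by rewrite (_ : Gset 0 = setT) //; apply/seteqP; split => x //=.
rewrite (_ : Gset m.+1 = `[m.+1%:R, +oo[%classic); first exact: measurable_itv.
apply/seteqP; split => x /=; rewrite in_itv /= andbT.
  by rewrite /Gset /= truncn_gt_nat.
by rewrite /Gset /= truncn_gt_nat.
Qed.

Lemma kap_meas (k : 'I_Nm.+1) : measurable (kap @^-1` [set k]).
Proof.
have kle : (k <= Nm)%N by rewrite -ltnS.
have [kN|kN] := ltnP k Nm.
  rewrite (_ : _ @^-1` _ = Gset k `\` Gset k.+1).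
    by apply: measurableD; exact: Gset_meas.
  apply/seteqP; split => x /=.
    move=> /(congr1 val); rewrite kap_val /Gset /= => hk; split.
      by rewrite -hk geq_minl.
    apply/negP; case: (leqP (truncn x) Nm) hk => h hk.
      by rewrite -hk ltnn.
    by move: kN; rewrite -hk ltnn.
  move=> [h1 h2]; apply: val_inj; rewrite /= kap_val.
  have ht : truncn x = k by apply/eqP; rewrite eqn_leq h1 andbT leqNgt -ltnS; exact/negP.
  by rewrite ht (minn_idPl (ltnW kN)).
have kE : val k = Nm by apply/eqP; rewrite eqn_leq kle kN.
rewrite (_ : _ @^-1` _ = Gset Nm); first exact: Gset_meas.
apply/seteqP; split => x /=.
  by move=> /(congr1 val); rewrite kap_val kE /Gset /= => <-; rewrite geq_minl.
move=> h; apply: val_inj; rewrite /= kap_val kE.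
by apply/minn_idPr.
Qed.

Lemma kap_le (r : R) : (val (kap r))%:R <= Num.max r 0.
Proof.
rewrite kap_val.
apply: (le_trans (_ : _ <= (truncn r)%:R)); first by rewrite ler_nat geq_minl.
have [r0|r0] := leP 0 r.
  by rewrite truncn_le.
rewrite truncn_floor ifF; last by apply/negbTE; rewrite -ltNge.
by [].
Qed.

End Idx.
Lemma X_le_uu (R : realType) (a r : R) : 0 <= r <= a ->
  r <= Num.min ((val (kap (truncn a) r)).+1%:R) a.
Proof.
move=> /andP[r0 ra]; rewrite le_min ra andbT kap_val.
case: (leqP (truncn r) (truncn a)) => h.
  by rewrite ltW // truncnS_gt.
apply: (le_trans ra); exact: ltW (truncnS_gt a).
Qed.

Lemma min_mul (R : realType) (c u : R) : 0 < c -> 0 < u ->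
  Num.min 1 (c / u) * u = Num.min u c.
Proof.
move=> c0 u0.
have [h1|h1] := leP u c; have [h2|h2] := leP 1 (c / u).
- by rewrite mul1r.
- by move: h2; rewrite ltr_pdivrMr // mul1r => /(le_lt_trans h1); rewrite ltxx.
- by move: h2; rewrite ler_pdivlMr // mul1r => /(lt_le_trans h1); rewrite ltxx.
- by rewrite mulfVK // gt_eqF.
Qed.

Unset Implicit Arguments.

Theorem mainTheorem4 (R : realType) :
  exists C : R, 0 < C /\
  forall (d : measure_display) (T : measurableType d) (P : probability T R)
    (n : nat) (K : R) (X : 'I_n -> T -> R) (eps : R),
    (1 <= n)%N -> 1 <= K ->
    iid P X ->
    (forall j, {ae P, forall x, 0 <= X j x <= K * n%:R}) ->
    (forall j, (\int[P]_x (X j x)%:E <= 1)%E) ->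
    0 < eps < 1 / 2 ->
    exists (d' : measure_display) (T' : measurableType d')
      (P' : probability T' R) (X' : 'I_n -> T' -> R) (W : 'I_n -> T' -> R),
      (* (X'_j) is a copy of (X_j) on the enlarged space *)
      iid P' X' /\
      (forall j (B : set R), measurable B -> P' (X' j @^-1` B) = P (X j @^-1` B)) /\
      (forall j, measurable_fun setT (W j)) /\
      (forall j x, 0 <= W j x <= 1) /\
      {ae P', forall x,
         \sum_(j < n) W j x * X' j x <= C * K * ln (eps^-1) * n%:R} /\
      (1 <= \int[P']_x inv_prod W x <= 1 + eps%:E)%E.
Proof.
exists 128; split; first by rewrite ltr0n.
move=> d T P n K X eps hn hK hiid hae hint /andP[he0 he1].
have [[mX hind] hid] := hiid.
have K0 : 0 < K by apply: lt_le_trans hK; exact: ltr01.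
have Kn0 : 0 < K * n%:R by rewrite mulr_gt0 // ltr0n.
set Nm := truncn (K * n%:R).
pose uu (k : 'I_Nm.+1) : R := Num.min ((val k).+1%:R) (K * n%:R).
have hu : forall k, 0 < uu k <= K * n%:R.
  by move=> k; rewrite /uu ge_min lexx orbT andbT lt_min ltr0n Kn0.
pose vv x : {ffun 'I_n -> 'I_Nm.+1} := [ffun i => kap Nm (X i x)].
pose W i x := Wd K eps uu (vv x) i.
exists d, T, P, X, W.
have mB i k : measurable (X i @^-1` (kap Nm @^-1` [set k])).
  by have := mX i measurableT _ (kap_meas k); rewrite setTI.
have cellE w : vv @^-1` [set w] =
    \bigcap_(i in [set: 'I_n]) (X i @^-1` (kap Nm @^-1` [set w i])).
  apply/seteqP; split => x /=.
    by move=> <- i _ /=; rewrite /vv ffunE.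
  by move=> h; apply/ffunP => i; rewrite /vv ffunE; exact: (h i).
have mcell w : measurable (vv @^-1` [set w]).
  by rewrite cellE; apply: fin_bigcap_measurable => // i _.
have Pcell w : P (vv @^-1` [set w]) =
    (\prod_(j < n) P (X j @^-1` (kap Nm @^-1` [set w j])))%E.
  rewrite cellE; apply: hind => j; exact: kap_meas.
have mW j : measurable_fun setT (W j).
  exact: (fin_meas mcell (fun w => Wd K eps uu w j)).
have W01 j x : 0 <= W j x <= 1.
  by rewrite /W Wd_le1 andbT ltW // (Wd_gt0 eps hn hK hu).
split => //; split => //; split => //; split => //.
have hall : \forall x \ae P, forall i : 'I_n, 0 <= X i x <= K * n%:R.
  have : \forall x \ae P, forall m : nat, forall i : 'I_n, val i = m ->
      0 <= X i x <= K * n%:R.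
    apply: ae_foralln => m.
    have [mn|mn] := ltnP m n.
      apply: filterS (hae (Ordinal mn)) => x hx i hi.
      by have -> : i = Ordinal mn by apply: val_inj.
    apply: nearW => y j hj; move: (ltn_ord j); rewrite hj ltnNge mn //.
  by apply: filterS => y hy j; exact: (hy (val j) j erefl).
split.
  apply: filterS hall => x hx.
  set w := vv x.
  apply: (le_trans (_ : _ <= \sum_(j < n) W j x * uu (w j))).
    apply: ler_sum => j _; apply: ler_wpM2l; first by case/andP: (W01 j x).
    rewrite /uu /w /vv ffunE; exact: X_le_uu (hx j).
  apply: (le_trans (_ : _ <= Tsum K uu w (jst K eps uu w))).
    rewrite /Tsum; apply: ler_sum => j _; rewrite /W -/w /Wd min_mul ?lexx //.
      exact: (cc_gt0 hn hK).
    by case/andP: (hu (w j)).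
  exact: (jst_ok uu hn hK he0 he1 w).
have inv_eq x : inv_prod W x = (cost K eps uu (vv x))%:E.
  have p0 : 0 < \prod_(j < n) W j x.
    by apply: prodr_gt0 => j _; rewrite /W (Wd_gt0 eps hn hK hu).
  by rewrite /inv_prod /= (gt_eqF p0).
under eq_integral do rewrite inv_eq.
pose i0 := Ordinal hn.
pose p k := fine (P (X i0 @^-1` (kap Nm @^-1` [set k]))).
have PX j k : P (X j @^-1` (kap Nm @^-1` [set k])) = (p k)%:E.
  rewrite (hid j i0 _ (kap_meas k)) /p fineK // ge0_fin_numE ?measure_ge0 //.
  exact: le_lt_trans (probability_le1 _ (mB i0 k)) (ltry _).
have p0 k : 0 <= p k by rewrite /p fine_ge0 // measure_ge0.
have hint1 (G : 'I_Nm.+1 -> R) : (forall k, 0 <= G k) ->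
    (\int[P]_x (G (kap Nm (X i0 x)))%:E = (\sum_k G k * p k)%:E)%E.
  move=> G0; rewrite (fin_integral P (f := fun x => kap Nm (X i0 x))) //.
    by rewrite -sumEFin; apply: eq_bigr => k _; rewrite EFinM; congr (_ * _)%E; exact: PX i0 k.
  by move=> k; exact: mB.
have sp : \sum_k p k = 1.
  have := hint1 (fun _ => 1) (fun _ => ler01).
  have -> : (\int[P]_x ((fun _ : 'I_Nm.+1 => (1:R)) (kap Nm (X i0 x)))%:E = 1)%E.
    rewrite (integral_cst P measurableT 1) mul1e; exact: probability_setT.
  move=> /esym /eqP; rewrite eqe => /eqP <-.
  by apply: eq_bigr => k _; rewrite mul1r.
have spk : \sum_k (val k)%:R * p k <= 1.
  have := hint1 (fun k => (val k)%:R) (fun k => ler0n _ _).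
  move=> h.
  suff : (\int[P]_x ((val (kap Nm (X i0 x)))%:R)%:E <= 1)%E by rewrite h lee_fin.
  apply: le_trans; last exact: hint i0.
  have mXi : measurable_fun setT (X i0) := mX i0.
  rewrite (ae_eq_integral (fun x => (Num.max (X i0 x) 0)%:E) (fun x => (X i0 x)%:E)) //.
  - apply: (ge0_le_integral P measurableT).
    + by move=> x _; rewrite lee_fin ler0n.
    + apply/measurable_realfun.measurable_EFinP.
      exact: (fin_meas (f := fun x => kap Nm (X i0 x)) (fun k => mB i0 k) (fun k => (val k)%:R)).
    + apply/measurable_realfun.measurable_EFinP.
      apply: measurable_realfun.measurable_maxr => //; exact: measurable_cst.
    + by move=> x _; rewrite lee_fin kap_le.
  - exact/measurable_realfun.measurable_EFinP.
  - apply/measurable_realfun.measurable_EFinP.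
    apply: measurable_realfun.measurable_maxr => //; exact: measurable_cst.
  - apply: filterS (hae i0) => x /andP[hx _] _.
    by congr (_%:E); apply/esym/max_idPl.
have spu : \sum_k p k * uu k <= 2.
  apply: (le_trans (_ : _ <= \sum_k ((val k)%:R * p k + p k))).
    apply: ler_sum => k _.
    have h1 : uu k <= (val k)%:R + 1 by rewrite /uu ge_min -natr1 lexx.
    have := p0 k; nra.
  rewrite big_split /= sp; lra.
have cost0 (w : {ffun 'I_n -> 'I_Nm.+1}) : 0 <= cost K eps uu w.
  rewrite /cost invr_ge0; apply: prodr_ge0 => i _.
  exact: ltW (Wd_gt0 eps hn hK hu w i).
have Iexpr : (\int[P]_x (cost K eps uu (vv x))%:E =
    (\sum_(w : {ffun 'I_n -> 'I_Nm.+1}) cost K eps uu w * \prod_i p (w i))%:E)%E.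
  rewrite (fin_integral P mcell cost0) -sumEFin.
  apply: eq_bigr => w _; rewrite EFinM -prodEFin; congr (_ * _)%E.
  transitivity (P (vv @^-1` [set w])); first by [].
  by rewrite Pcell; apply: eq_bigr => j _; exact: PX.
have sp1 : \sum_k p k <= 1 by rewrite sp.
have fm := fin_main hn hK he0 he1 hu p0 sp1 spu.
rewrite Iexpr; apply/andP; split; last by rewrite -EFinD lee_fin.
rewrite lee_fin.
have e1 : \sum_(w : {ffun 'I_n -> 'I_Nm.+1}) \prod_i p (w i) = 1.
  by rewrite -(bigA_distr_bigA (fun (i : 'I_n) k => p k)) /= prodr_const sp expr1n.
rewrite -[X in X <= _]e1.
apply: ler_sum => w _; rewrite ler_peMl //; first exact: prodr_ge0.
rewrite /cost invf_ge1 //.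
- apply: prodr_ile1 => i _; rewrite Wd_le1 andbT; exact: ltW (Wd_gt0 eps hn hK hu w i).
- by apply: prodr_gt0 => i _; exact: (Wd_gt0 eps hn hK hu w i).
Qed.
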